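(* For every $n\ge1$ and every $g\in\mathcal D_n$, $$a(N)\,v^N_n(g)=v^N_{n+1}(a\,g),\qquad a^*(N)\,v^N_n(g)=v^N_{n-1}(a^*g)+O(1/N),$$ where $O(1/N)$ denotes a vector of norm at most $C/N$ with $C>0$ independent of $N$.
   Context: Continuous side: $\mathcal X_{n,m}=\{(x_1,\dots,x_n)\in\mathbb{R}^n:x_1>\dots>x_m<\dots<x_n\}$, $\mathcal X_n=\bigcup_m\mathcal X_{n,m}$, $\mathbb 1_n,\mathbb 1_{n,m}$ their indicators; $\mathcal{CV}=\mathbb{C}\Lambda\oplus\bigoplus_{n\ge1}L^2(\mathcal X_n)$. $a=a(\mathbb 1_{[0,1]})$: $a\Lambda=\mathbb 1_{[0,1]}$, $(ag)(x,x_1,\dots,x_n)=\mathbb 1_{[0,1]}(x)\mathbb 1_{n+1}(x,x_1,\dots,x_n)g(x_1,\dots,x_n)$; $a^*$: $a^*\Lambda=0$, $a^*g=(\int_0^1g)\Lambda$ for $g\in L^2(\mathcal X_1)$, and $(a^*g)(\vec x)=\mathbb 1_{n,1}(\vec x)\int_0^{x_1}g(x,\vec x)dx+\int_{x_1}^1g(x,\vec x)dx$ for $g\in L^2(\mathcal X_{n+1})$. $\mathcal D_n$ ($n\ge1$) is the set of $g\in L^2(\mathcal X_n)$ that vanish outside $[0,1]^n$ and coincide on each $\mathcal X_{n,m}\cap[0,1]^n$ with a polynomial $g_{n,m}$; $\mathcal D_0=\mathbb{C}\Lambda$. Discrete side: $I=\mathbb{N}_+$, $I_n$ the set of $(i_1,\dots,i_n)$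 with $i_1>\dots>i_m<\dots<i_n$ for some $m$; $\mathcal{DV}$ with orthonormal basis $\{\Omega\}\cup\{e_{i_1}\otimes\dots\otimes e_{i_n}:(i_1,\dots,i_n)\in I_n\}$; $a_i\Omega=e_i$, $a_i(e_{i_1}\otimes\dots\otimes e_{i_n})=\mathbf 1[(i,i_1,\dots,i_n)\in I_{n+1}]\,e_i\otimes e_{i_1}\otimes\dots\otimes e_{i_n}$; $a(N)=N^{-1/2}\sum_{i=1}^Na_i$, $a^*(N)=a(N)^*$. Vectors: $v^N_0(c\Lambda)=c\Omega$ and $v^N_n(g)=N^{-n/2}\sum_{(i_1,\dots,i_n)\in I_n\cap[N]^n}g(i_1/N,\dots,i_n/N)\,e_{i_1}\otimes\dots\otimes e_{i_n}$ for $g\in\mathcal D_n$. *)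

(* Defs.v *)
From Stdlib Require Import Reals Lra Lia List ClassicalEpsilon.
Import ListNotations.
Open Scope R_scope.

Definition C : Type := (R * R)%type.
Definition C0 : C := (0, 0).
Definition Cadd (a b : C) : C := (fst a + fst b, snd a + snd b).
Definition Csub (a b : C) : C := (fst a - fst b, snd a - snd b).
Definition Cscale (r : R) (a : C) : C := (r * fst a, r * snd a).
Definition Cnorm2 (a : C) : R := fst a * fst a + snd a * snd a.
Definition Csum {A} (f : A -> C) (l : list A) : C := fold_right Cadd C0 (map f l).

Definition ind (P : Prop) : R :=
  if excluded_middle_informative P then 1 else 0.

(** Riemann integral over [a,b] (value of RiemannInt when integrable, else 0). *)
Definition Rint (f : R -> R) (a b : R) : R :=
  match excluded_middle_informative
          (exists I, exists pr : Riemann_integrable f a b, RiemannInt pr = I) with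
  | left h => proj1_sig (constructive_indefinite_description _ h)
  | right _ => 0
  end.
Definition Cint (f : R -> C) (a b : R) : C :=
  (Rint (fun x => fst (f x)) a b, Rint (fun x => snd (f x)) a b).

(** Polynomials (mpoly) in several variables with complex coefficients:
    finite sums of monomials c * x_1^{e_1} ... x_k^{e_k}. *)
Definition mpoly : Type := list (C * list nat).
Definition mono (e : list nat) (x : list R) : R :=
  fold_right Rmult 1 (map (fun p => pow (fst p) (snd p)) (combine x e)).
Definition peval (p : mpoly) (x : list R) : C :=
  Csum (fun ce => Cscale (mono (snd ce) x) (fst ce)) p.

(* points of R^n are lists of length n; x_1 is the head. *)
Definition inX (n m : nat) (x : list R) : Prop :=
  length x = n /\ (1 <= m <= n)%nat /\
  (forall k, (k + 1 < m)%nat -> nth k x 0 > nth (k + 1) x 0) /\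
  (forall k, (m <= k + 1)%nat -> (k + 1 < n)%nat -> nth k x 0 < nth (k + 1) x 0).
Definition inXn (n : nat) (x : list R) : Prop := exists m, inX n m x.
Definition inbox (x : list R) : Prop := Forall (fun t => 0 <= t <= 1) x.

(* Elements of L^2(X_n) are represented by functions list R -> C (values
   outside X_n are irrelevant); level 0 (C Lambda) is a function whose value
   at [] is the coefficient of Lambda. *)
Definition CVfun := list R -> C.

(* g (representative) belongs to D_n with polynomial pieces p m = g_{n,m} *)
Definition isD (n : nat) (p : nat -> mpoly) (g : CVfun) : Prop :=
  forall m x, inX n m x ->
    (inbox x -> g x = peval (p m) x) /\ (~ inbox x -> g x = C0).

(* a = a(1_[0,1]) applied to g in L^2(X_n) (or in C Lambda when n = 0) *)
Definition acont (n : nat) (g : CVfun) : CVfun :=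
  fun y => match y with
           | x :: xs => Cscale (ind (0 <= x <= 1) * ind (inXn (S n) y)) (g xs)
           | [] => C0
           end.

Definition astar (n : nat) (g : CVfun) : CVfun :=
  fun xs =>
    match n with
    | 1%nat => Cint (fun x => g [x]) 0 1
    | _ => match xs with
           | x1 :: _ =>
               Cadd (Cscale (ind (inX (n - 1) 1 xs)) (Cint (fun x => g (x :: xs)) 0 x1))
                    (Cint (fun x => g (x :: xs)) x1 1)
           | [] => C0
           end
    end.

(* A vector of DV is given by its coefficients: w = [] is Omega, and a word
   w = [i_1;...;i_n] in I_n gives e_{i_1} (x) ... (x) e_{i_n}. *)
Definition DVvec := list nat -> C.

Definition inXnat (n m : nat) (w : list nat) : Prop :=
  length w = n /\ (1 <= m <= n)%nat /\
  (forall k, (k + 1 < m)%nat -> (nth k w 0 > nth (k + 1) w 0)%nat) /\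
  (forall k, (m <= k + 1)%nat -> (k + 1 < n)%nat -> (nth k w 0 < nth (k + 1) w 0)%nat).
Definition inI (n : nat) (w : list nat) : Prop :=
  Forall (fun i => (1 <= i)%nat) w /\ exists m, inXnat n m w.
Definition inIw (w : list nat) : Prop := inI (length w) w.

Definition adisc (i : nat) (v : DVvec) : DVvec :=
  fun w => match w with
           | j :: w' => Cscale (ind (j = i /\ inIw (j :: w'))) (v w')
           | [] => C0
           end.
(* <e_w, a_i^* v> = <a_i e_w, v> *)
Definition adisc_star (i : nat) (v : DVvec) : DVvec :=
  fun w => Cscale (ind (inIw (i :: w))) (v (i :: w)).

Definition aN (N : nat) (v : DVvec) : DVvec :=
  fun w => Cscale (/ sqrt (INR N)) (Csum (fun i => adisc i v w) (seq 1 N)).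
Definition aStarN (N : nat) (v : DVvec) : DVvec :=
  fun w => Cscale (/ sqrt (INR N)) (Csum (fun i => adisc_star i v w) (seq 1 N)).

(* v^N_n(f): for n = 0 this is f([]) Omega *)
Definition vN (N n : nat) (f : CVfun) : DVvec :=
  fun w => Cscale (ind (length w = n /\ (n = 0%nat \/ inI n w) /\
                        Forall (fun i => (i <= N)%nat) w)
                   * (/ sqrt (INR N)) ^ n)
                  (f (map (fun i => INR i / INR N) w)).

Definition DVsub (u v : DVvec) : DVvec := fun w => Csub (u w) (v w).

Definition DVnorm_le (v : DVvec) (r : R) : Prop :=
  forall ws : list (list nat), NoDup ws ->
    fold_right Rplus 0 (map (fun w => Cnorm2 (v w)) ws) <= r ^ 2.

(* Main.v *)
From Stdlib Require Import Reals Lra Lia List ClassicalEpsilon Classical.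
From Coquelicot Require Import Hierarchy RInt Continuity Rcomplements.
Require Import Defs.
Import ListNotations.
Open Scope R_scope.

Lemma Ceq (a b : Defs.C) : fst a = fst b -> snd a = snd b -> a = b.
Proof. destruct a, b; simpl; intros; subst; reflexivity. Qed.

Lemma ind_T (P : Prop) : P -> ind P = 1.
Proof. intro H; unfold ind; destruct excluded_middle_informative; tauto. Qed.
Lemma ind_F (P : Prop) : ~P -> ind P = 0.
Proof. intro H; unfold ind; destruct excluded_middle_informative; tauto. Qed.
Lemma ind_iff (P Q : Prop) : (P <-> Q) -> ind P = ind Q.
Proof. intro H; destruct (classic P). rewrite !ind_T; tauto. rewrite !ind_F; tauto. Qed.
Lemma ind_and (P Q : Prop) : ind (P /\ Q) = ind P * ind Q.
Proof. destruct (classic P), (classic Q);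
  [rewrite !ind_T by tauto|rewrite (ind_F (P/\Q)), (ind_F Q)  by tauto
  |rewrite (ind_F (P/\Q)), (ind_F P) by tauto|rewrite (ind_F (P/\Q)), (ind_F P) by tauto]; ring. Qed.
Lemma ind_01 (P : Prop) : ind P = 0 \/ ind P = 1.
Proof. destruct (classic P); [right; apply ind_T|left; apply ind_F]; auto. Qed.

Definition RS {A} (f : A -> R) (l : list A) : R := fold_right Rplus 0 (map f l).

Lemma RS_app {A} (f : A -> R) l1 l2 : RS f (l1 ++ l2) = RS f l1 + RS f l2.
Proof. unfold RS; induction l1; simpl; [ring| rewrite IHl1; ring]. Qed.
Lemma RS_ext_in {A} (f g : A -> R) l : (forall x, In x l -> f x = g x) -> RS f l = RS g l.
Proof. unfold RS; induction l; simpl; intros; auto. rewrite H, IHl; auto. Qed.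
Lemma RS_scal {A} (f : A -> R) c l : RS (fun x => c * f x) l = c * RS f l.
Proof. unfold RS; induction l; simpl; [ring| rewrite IHl; ring]. Qed.
Lemma RS_zero {A} (l : list A) : RS (fun _ => 0) l = 0.
Proof. unfold RS; induction l; simpl; [ring| rewrite IHl; ring]. Qed.

Record proj (pi : Defs.C -> R) : Prop := {
  pa : forall a b, pi (Cadd a b) = pi a + pi b;
  ps : forall r a, pi (Cscale r a) = r * pi a;
  p0 : pi C0 = 0;
  pb : forall c, Rabs (pi c) <= Rabs (fst c) + Rabs (snd c);
  pint : forall f a b, pi (Cint f a b) = Rint (fun x => pi (f x)) a b;
  pd : forall a b, pi (Csub a b) = pi a - pi b }.

Lemma proj_fst : proj fst.
Proof. split; intros; simpl; try ring; try reflexivity.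
  pose proof (Rabs_pos (snd c)); lra. Qed.
Lemma proj_snd : proj snd.
Proof. split; intros; simpl; try ring; try reflexivity.
  pose proof (Rabs_pos (fst c)); lra. Qed.

Lemma proj_Csum pi {A} (f : A -> Defs.C) l : proj pi -> pi (Csum f l) = RS (fun x => pi (f x)) l.
Proof. intro P; unfold Csum, RS; induction l; simpl. apply (p0 _ P). rewrite (pa _ P), IHl; auto. Qed.

Lemma Ceq_proj (a b : Defs.C) : (forall pi, proj pi -> pi a = pi b) -> a = b.
Proof. intro H; apply Ceq; apply H; [apply proj_fst|apply proj_snd]. Qed.

Lemma Cnorm2_bound (z : Defs.C) e : Rabs (fst z) <= e -> Rabs (snd z) <= e -> Cnorm2 z <= 2 * e^2.
Proof. intros H1 H2; unfold Cnorm2. destruct z as [a b]; simpl in *.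
  assert (a*a <= e^2). { assert (a*a = Rabs a * Rabs a) by (unfold Rabs; destruct Rcase_abs; ring).
   pose proof (Rabs_pos a). simpl. nra. }
  assert (b*b <= e^2). { assert (b*b = Rabs b * Rabs b) by (unfold Rabs; destruct Rcase_abs; ring).
   pose proof (Rabs_pos b). simpl. nra. }
  lra. Qed.

Lemma inX_tail n m x y : inX (S n) m (x::y) -> (1 <= n)%nat -> inX n (Nat.max 1 (m-1)) y.
Proof.
  intros [Hl [Hm [Hd Hi]]] Hn. simpl in Hl. split; [lia|]. split; [lia|]. split.
  - intros k Hk. specialize (Hd (S k)). simpl in Hd. apply Hd. lia.
  - intros k H1 H2. specialize (Hi (S k)). simpl in Hi. apply Hi; lia.
Qed.

Lemma inX_tail1 n x y : inX (S n) 1 (x::y) -> (1 <= n)%nat -> inX n 1 y.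
Proof. intros H Hn. apply inX_tail in H; auto. Qed.

Lemma inX_cons_gt n m x y : inX n m y -> x > nth 0 y 0 -> inX (S n) (S m) (x::y).
Proof.
  intros [Hl [Hm [Hd Hi]]] Hx. split; [simpl; lia|]. split; [lia|]. split.
  - intros k Hk. destruct k; simpl. exact Hx. specialize (Hd k). simpl. apply Hd. lia.
  - intros k H1 H2. destruct k. lia. simpl. apply Hi; lia.
Qed.

Lemma inX_cons_lt n x y : inX n 1 y -> x < nth 0 y 0 -> (1 <= n)%nat -> inX (S n) 1 (x::y).
Proof.
  intros [Hl [Hm [Hd Hi]]] Hx Hn. split; [simpl; lia|]. split; [lia|]. split.
  - intros k Hk. lia.
  - intros k H1 H2. destruct k; simpl. exact Hx. apply Hi; lia.
Qed.

Lemma inX_cons_inv n m x y : inX (S n) m (x::y) -> (1 <= n)%nat ->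
  x > nth 0 y 0 \/ (x < nth 0 y 0 /\ inX n 1 y).
Proof.
  intros H Hn. destruct H as [Hl [Hm [Hd Hi]]].
  destruct (Nat.eq_dec m 1).
  - subst. right. split. specialize (Hi 0%nat). simpl in Hi. apply Hi; simpl in Hl; lia.
    apply inX_tail1 with x; auto. split; auto.
  - left. specialize (Hd 0%nat). simpl in Hd. apply Hd. lia.
Qed.

Definition sc (N : nat) (i : nat) : R := INR i / INR N.

Lemma nth_map_sc N w k : nth k (map (sc N) w) 0 = sc N (nth k w 0%nat).
Proof. revert k; induction w; intros k; destruct k; simpl; auto; unfold sc; simpl; unfold Rdiv; ring. Qed.

Lemma sc_lt N a b : (1 <= N)%nat -> (a < b)%nat <-> sc N a < sc N b.
Proof. intro HN. unfold sc. assert (0 < INR N) by (apply lt_0_INR; lia).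
  split; intro H'.
  - apply Rmult_lt_compat_r. apply Rinv_0_lt_compat; auto. apply lt_INR; auto.
  - apply INR_lt. apply Rmult_lt_reg_r with (/ INR N). apply Rinv_0_lt_compat; auto. exact H'.
Qed.

Lemma inX_sc N n m w : (1 <= N)%nat -> inXnat n m w <-> inX n m (map (sc N) w).
Proof.
  intro HN. unfold inXnat, inX. rewrite length_map.
  split; intros [Hl [Hm [Hd Hi]]]; (split; [auto|]); (split; [auto|]); split.
  - intros k Hk; rewrite !nth_map_sc. apply sc_lt; auto. apply Hd; auto.
  - intros k H1 H2; rewrite !nth_map_sc. apply sc_lt; auto.
  - intros k Hk. specialize (Hd k Hk); rewrite !nth_map_sc in Hd. apply sc_lt in Hd; auto.
  - intros k H1 H2. specialize (Hi k H1 H2); rewrite !nth_map_sc in Hi. apply sc_lt in Hi; auto.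
Qed.

Definition box01 (t : R) := 0 <= t <= 1.

Lemma pow01 t k : box01 t -> 0 <= t ^ k <= 1.
Proof. intros [H1 H2]; induction k; simpl; [lra|]. split; [apply Rmult_le_pos; lra|].
  destruct IHk. rewrite <- (Rmult_1_r 1). apply Rmult_le_compat; lra. Qed.

Lemma mono_box e y : Forall box01 y -> 0 <= mono e y <= 1.
Proof. revert e; induction y; intros e Hy; destruct e; try (unfold mono; simpl; lra).
  change (mono (n :: e) (a :: y)) with (a ^ n * mono e y).
  inversion Hy; subst. pose proof (pow01 a n H1). specialize (IHy e H2).
  split; [apply Rmult_le_pos; lra|]. rewrite <- (Rmult_1_r 1). apply Rmult_le_compat; lra. Qed.

Lemma pow_lip x x' k : box01 x -> box01 x' -> Rabs (x^k - x'^k) <= INR k * Rabs (x - x').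
Proof. intros Hx Hx'. induction k; simpl.
  - rewrite Rminus_diag, Rabs_R0. lra.
  - replace (x * x ^ k - x' * x' ^ k) with (x * (x^k - x'^k) + x'^k * (x - x')) by ring.
    eapply Rle_trans; [apply Rabs_triang|]. rewrite !Rabs_mult.
    pose proof (pow01 x' k Hx'). unfold box01 in *.
    rewrite (Rabs_pos_eq x) by lra. rewrite (Rabs_pos_eq (x'^k)) by lra.
    pose proof (Rabs_pos (x^k - x'^k)). pose proof (Rabs_pos (x - x')).
    assert (x * Rabs (x ^ k - x' ^ k) <= INR k * Rabs (x - x')) by nra.
    destruct k; simpl INR in *; nra. Qed.

Definition hde (e : list nat) : nat := match e with [] => 0%nat | k :: _ => k end.

Lemma mono_cons e x y : mono e (x :: y) = match e with [] => 1 | k :: e' => x ^ k * mono e' y end.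
Proof. destruct e; reflexivity. Qed.

Lemma mono_lip e x x' y : Forall box01 y -> box01 x -> box01 x' ->
  Rabs (mono e (x::y) - mono e (x'::y)) <= INR (hde e) * Rabs (x - x').
Proof. intros Hy Hx Hx'. rewrite !mono_cons. destruct e as [|k e]; simpl.
  - rewrite Rminus_diag, Rabs_R0. lra.
  - pose proof (mono_box e y Hy).
    replace (x ^ k * mono e y - x' ^ k * mono e y) with ((x^k - x'^k) * mono e y) by ring.
    rewrite Rabs_mult, (Rabs_pos_eq (mono e y)) by lra.
    pose proof (pow_lip x x' k Hx Hx'). pose proof (Rabs_pos (x^k - x'^k)). nra. Qed.

Lemma peval_cons ce P z : peval (ce :: P) z = Cadd (Cscale (mono (snd ce) z) (fst ce)) (peval P z).
Proof. reflexivity. Qed.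

Definition cabs (c : Defs.C) := Rabs (fst c) + Rabs (snd c).
Definition LipP (P : mpoly) : R := RS (fun ce => INR (hde (snd ce)) * cabs (fst ce)) P.
Definition MbP (P : mpoly) : R := RS (fun ce => cabs (fst ce)) P.

Lemma RS_nonneg {A} (f : A -> R) l : (forall x, 0 <= f x) -> 0 <= RS f l.
Proof. intro H; unfold RS; induction l; simpl; [lra|]. specialize (H a); lra. Qed.
Lemma cabs_nonneg c : 0 <= cabs c.
Proof. unfold cabs. pose proof (Rabs_pos (fst c)). pose proof (Rabs_pos (snd c)). lra. Qed.
Lemma LipP_nonneg P : 0 <= LipP P.
Proof. apply RS_nonneg. intros. apply Rmult_le_pos. apply pos_INR. apply cabs_nonneg. Qed.
Lemma MbP_nonneg P : 0 <= MbP P.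
Proof. apply RS_nonneg. intros. apply cabs_nonneg. Qed.

Lemma peval_lip pi P x x' y : proj pi -> Forall box01 y -> box01 x -> box01 x' ->
  Rabs (pi (peval P (x::y)) - pi (peval P (x'::y))) <= LipP P * Rabs (x - x').
Proof. intros Pi Hy Hx Hx'. induction P as [|ce P IH].
  - unfold peval, Csum; simpl. rewrite Rminus_diag, Rabs_R0. unfold LipP, RS; simpl; lra.
  - rewrite !peval_cons, !(pa _ Pi), !(ps _ Pi).
    replace (mono (snd ce) (x :: y) * pi (fst ce) + pi (peval P (x :: y)) -
      (mono (snd ce) (x' :: y) * pi (fst ce) + pi (peval P (x' :: y)))) with
      ((mono (snd ce) (x :: y) - mono (snd ce) (x' :: y)) * pi (fst ce) +
       (pi (peval P (x :: y)) - pi (peval P (x' :: y)))) by ring.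
    eapply Rle_trans; [apply Rabs_triang|]. rewrite Rabs_mult.
    pose proof (mono_lip (snd ce) x x' y Hy Hx Hx'). pose proof (pb _ Pi (fst ce)).
    unfold LipP, RS in *; simpl. fold (cabs (fst ce)) in H0.
    pose proof (Rabs_pos (pi (fst ce))). pose proof (Rabs_pos (x - x')).
    pose proof (Rabs_pos (mono (snd ce) (x :: y) - mono (snd ce) (x' :: y))).
    pose proof (pos_INR (hde (snd ce))).
    assert (Rabs (mono (snd ce) (x :: y) - mono (snd ce) (x' :: y)) * Rabs (pi (fst ce)) <=
            INR (hde (snd ce)) * Rabs (x - x') * cabs (fst ce)).
    { apply Rmult_le_compat; auto. }
    nra. Qed.

Lemma peval_bound pi P z : proj pi -> Forall box01 z -> Rabs (pi (peval P z)) <= MbP P.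
Proof. intros Pi Hz. induction P as [|ce P IH].
  - unfold peval, Csum; simpl. rewrite (p0 _ Pi), Rabs_R0. unfold MbP, RS; simpl; lra.
  - rewrite peval_cons, (pa _ Pi), (ps _ Pi). eapply Rle_trans; [apply Rabs_triang|].
    rewrite Rabs_mult. pose proof (mono_box (snd ce) z Hz). rewrite (Rabs_pos_eq (mono _ _)) by lra.
    pose proof (pb _ Pi (fst ce)). fold (cabs (fst ce)) in H0. unfold MbP, RS in *; simpl.
    pose proof (Rabs_pos (pi (fst ce))). nra. Qed.

Lemma pow_cont k x : continuous (fun t => t ^ k) x.
Proof. induction k; simpl. apply continuous_const.
  apply (continuous_mult (fun t => t) (fun t => t ^ k)); auto. apply continuous_id. Qed.

Lemma peval_cont pi P y x : proj pi -> continuous (fun t => pi (peval P (t::y))) x.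
Proof. intros Pi. induction P as [|ce P IH].
  - unfold peval, Csum; simpl. apply continuous_const.
  - apply continuous_ext with (fun t => plus (mult (mono (snd ce) (t :: y)) (pi (fst ce))) (pi (peval P (t :: y)))).
    { intros t. rewrite peval_cons, (pa _ Pi), (ps _ Pi). reflexivity. }
    apply (continuous_plus (fun t => mult (mono (snd ce) (t :: y)) (pi (fst ce)))); auto.
    apply (continuous_mult (fun t => mono (snd ce) (t :: y)) (fun _ => pi (fst ce))); [|apply continuous_const].
    apply continuous_ext with (fun t => match snd ce with [] => 1 | k :: e' => t ^ k * mono e' y end).
    { intros; rewrite mono_cons; reflexivity. }
    destruct (snd ce) as [|k e]. apply continuous_const.
    apply (continuous_mult (fun t => t ^ k) (fun _ => mono e y)). apply pow_cont. apply continuous_const.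
Qed.

Lemma exRI (q : R -> R) a b : (forall x, continuous q x) -> ex_RInt q a b.
Proof. intros H; apply (ex_RInt_continuous (V:=R_CompleteNormedModule)); intros; apply H. Qed.

Lemma step_bound q L v w : (forall x, continuous q x) ->
  (forall x y, box01 x -> box01 y -> Rabs (q x - q y) <= L * Rabs (x - y)) ->
  0 <= v -> v <= w -> w <= 1 ->
  Rabs (q w * (w - v) - RInt q v w) <= L * (w - v) ^ 2.
Proof.
  intros Hc HL H0 H1 H2.
  assert (E : RInt q v w - q w * (w - v) = RInt (fun t => q t - q w) v w).
  { rewrite (RInt_minus q (fun _ => q w)) by (apply exRI; auto; intros; apply continuous_const).
    rewrite RInt_const. unfold minus, plus, opp, scal; simpl. unfold mult; simpl. ring. }
  rewrite Rabs_minus_sym, E.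
  replace (L * (w - v) ^ 2) with ((w - v) * (L * (w - v))) by ring.
  apply abs_RInt_le_const; auto.
  - apply (ex_RInt_minus q (fun _ => q w)); apply exRI; auto. intros; apply continuous_const.
  - intros t Ht. eapply Rle_trans. apply HL; unfold box01; lra.
    rewrite Rabs_left1 by lra. assert (0 <= L).
    { specialize (HL 0 1). rewrite Rminus_0_l, Rabs_Ropp, Rabs_R1 in HL.
      pose proof (Rabs_pos (q 0 - q 1)). unfold box01 in HL. assert (H' : Rabs (q 0 - q 1) <= L * 1) by (apply HL; lra). lra. }
    nra.
Qed.

Lemma core (q : R -> R) L N a d : (1 <= N)%nat -> (a + d <= N)%nat -> (forall x, continuous q x) ->
  (forall x y, box01 x -> box01 y -> Rabs (q x - q y) <= L * Rabs (x - y)) ->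
  Rabs (RS (fun i => q (sc N i) / INR N) (seq (S a) d) - RInt q (sc N a) (sc N (a + d)))
    <= INR d * L / (INR N) ^ 2.
Proof.
  intros HN Had Hc HL. assert (HN' : 0 < INR N) by (apply lt_0_INR; lia).
  induction d.
  - rewrite Nat.add_0_r, RInt_point. unfold RS; simpl. unfold zero; simpl.
    rewrite Rminus_0_r, Rabs_R0. unfold Rdiv; lra.
  - rewrite seq_S, RS_app.
    change (RS (fun i => q (sc N i) / INR N) [(S a + d)%nat]) with (q (sc N (S a + d)) / INR N + 0).
    rewrite <- (RInt_Chasles q (sc N a) (sc N (a + d)) (sc N (a + S d))) by (apply exRI; auto).
    change (plus ?x ?y) with (x + y).
    assert (Hv : sc N (a + S d) - sc N (a + d) = / INR N).
    { unfold sc. rewrite !plus_INR, S_INR. field. lra. }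
    pose proof (step_bound q L (sc N (a + d)) (sc N (a + S d)) Hc HL) as S1.
    rewrite Hv in S1. replace (S a + d)%nat with (a + S d)%nat by lia.
    assert (0 <= sc N (a + d)) by (unfold sc; apply Rmult_le_pos; [apply pos_INR| left; apply Rinv_0_lt_compat; auto]).
    assert (sc N (a + S d) <= 1).
    { unfold sc. apply Rmult_le_reg_r with (INR N); auto. unfold Rdiv; rewrite Rmult_assoc, Rinv_l by lra.
      rewrite Rmult_1_r, Rmult_1_l; apply le_INR; lia. }
    pose proof (Rinv_0_lt_compat _ HN'). specialize (S1 H ltac:(lra) H0).
    specialize (IHd ltac:(lia)).
    match goal with |- Rabs (?A + (?B + 0) - (?C + ?D)) <= _ =>
      replace (A + (B + 0) - (C + D)) with ((A - C) + (B - D)) by ring end.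
    eapply Rle_trans; [apply Rabs_triang|].
    replace (q (sc N (a + S d)) / INR N) with (q (sc N (a + S d)) * / INR N) by reflexivity.
    replace (INR (S d)) with (INR d + 1) by (rewrite S_INR; ring). replace ((INR d + 1) * L / INR N ^ 2) with (INR d * L / INR N ^ 2 + L * (/ INR N) ^ 2)
      by (field; lra). lra.
Qed.

Lemma Rint_eq (h q : R -> R) a b : (forall x, Rmin a b < x < Rmax a b -> h x = q x) ->
  (forall x, continuous q x) -> Rint h a b = RInt q a b.
Proof.
  intros Hh Hc. assert (Ex : ex_RInt h a b).
  { apply (ex_RInt_ext q). intros; symmetry; auto. apply exRI; auto. }
  unfold Rint. destruct excluded_middle_informative as [E|nE].
  - destruct (constructive_indefinite_description _ E) as [I [pr Hpr]]. simpl.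
    rewrite <- Hpr, <- RInt_Reals. apply RInt_ext. auto.
  - exfalso. apply nE. pose proof (ex_RInt_Reals_0 _ _ _ Ex) as pr. exists (RiemannInt pr), pr. reflexivity.
Qed.

Lemma D1 k m w i : inXnat k m w -> (i > nth 0 w 0)%nat -> inXnat (S k) (S m) (i::w).
Proof. intros H Hi. apply (inX_sc 1); auto. apply (inX_sc 1) in H; auto. simpl.
  apply inX_cons_gt; auto. rewrite nth_map_sc. apply sc_lt; auto. Qed.

Lemma D2 k w i : inXnat k 1 w -> (i < nth 0 w 0)%nat -> (1 <= k)%nat -> inXnat (S k) 1 (i::w).
Proof. intros H Hi Hk. apply (inX_sc 1); auto. apply (inX_sc 1) in H; auto. simpl.
  apply inX_cons_lt; auto. rewrite nth_map_sc. apply sc_lt; auto. Qed.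

Lemma D3 k m w i : inXnat (S k) m (i::w) -> (1 <= k)%nat ->
  (i > nth 0 w 0)%nat \/ ((i < nth 0 w 0)%nat /\ inXnat k 1 w).
Proof. intros H Hk. apply (inX_sc 1) in H; auto. simpl in H. apply inX_cons_inv in H; auto.
  rewrite nth_map_sc in H. destruct H as [H|[H1 H2]].
  - left. apply (sc_lt 1); auto.
  - right. split. apply (sc_lt 1); auto. apply (inX_sc 1); auto. Qed.

Lemma D4 k w i : inI (S k) (i::w) -> (1 <= k)%nat -> inI k w.
Proof. intros [Hp [m Hm]] Hk. split. exact (Forall_inv_tail Hp).
  exists (Nat.max 1 (m-1)). apply (inX_sc 1); auto. apply (inX_sc 1) in Hm; auto.
  simpl in Hm. apply inX_tail in Hm; auto. Qed.

Fixpoint words (N k : nat) : list (list nat) :=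
  match k with 0%nat => [[]] | S k => flat_map (fun i => map (cons i) (words N k)) (seq 1 N) end.

Lemma words_in N w : Forall (fun i => 1 <= i <= N)%nat w -> In w (words N (length w)).
Proof. induction w; intros H; simpl; auto. apply in_flat_map. exists a. inversion H; subst.
  split. apply in_seq; lia. apply in_map. auto. Qed.

Lemma len_fm (l : list nat) (L : list (list nat)) : length (flat_map (fun i => map (cons i) L) l) = (length l * length L)%nat.
Proof. induction l; simpl; auto. rewrite length_app, length_map, IHl. reflexivity. Qed.

Lemma words_len N k : length (words N k) = (N ^ k)%nat.
Proof. induction k; simpl; auto. rewrite len_fm, length_seq, IHk. reflexivity. Qed.

Lemma sum_bound (f : list nat -> R) (E : list (list nat)) c ws : NoDup ws -> 0 <= c ->
  (forall w, ~ In w E -> f w = 0) -> (forall w, In w E -> f w <= c) ->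
  fold_right Rplus 0 (map f ws) <= c * INR (length E).
Proof.
  intros Hnd Hc H0 H1.
  set (dec := fun w => if in_dec (list_eq_dec Nat.eq_dec) w E then true else false).
  assert (S1 : fold_right Rplus 0 (map f ws) <= c * INR (length (filter dec ws))).
  { clear Hnd. induction ws; simpl. lra. unfold dec at 1. destruct in_dec.
    - simpl length. rewrite S_INR. specialize (H1 a i). lra.
    - rewrite H0 by auto. lra. }
  assert (length (filter dec ws) <= length E)%nat.
  { apply NoDup_incl_length. apply NoDup_filter; auto.
    intros x Hx. apply filter_In in Hx. destruct Hx as [_ Hx]. unfold dec in Hx. destruct in_dec; auto; discriminate. }
  apply le_INR in H. eapply Rle_trans; [exact S1|]. apply Rmult_le_compat_l; auto.
Qed.

Definition CondI (N n : nat) (w : list nat) : Prop :=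
  length w = n /\ (n = 0%nat \/ inI n w) /\ Forall (fun i => (i <= N)%nat) w.

Lemma aStar_pi pi N n g w : proj pi -> pi (aStarN N (vN N n g) w) =
  / sqrt (INR N) * RS (fun i => ind (inIw (i::w)) * (ind (CondI N n (i::w)) * (/ sqrt (INR N)) ^ n
      * pi (g (map (sc N) (i::w))))) (seq 1 N).
Proof. intro P. unfold aStarN. rewrite (ps _ P), (proj_Csum _ _ _ P). f_equal. apply RS_ext_in. intros i _.
  unfold adisc_star, vN. rewrite !(ps _ P). reflexivity. Qed.

Lemma vN_pi pi N n (f : CVfun) w : proj pi -> pi (vN N n f w) = ind (CondI N n w) * (/ sqrt (INR N)) ^ n * pi (f (map (sc N) w)).
Proof. intro P. unfold vN. rewrite (ps _ P). reflexivity. Qed.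

Lemma notgood_zero pi N n g w : proj pi -> (1 <= n)%nat -> ~ CondI N (n-1) w ->
  pi (DVsub (aStarN N (vN N n g)) (vN N (n - 1) (astar n g)) w) = 0.
Proof.
  intros P Hn Hw. unfold DVsub. rewrite (pd _ P), aStar_pi, vN_pi by auto.
  rewrite (ind_F (CondI N (n-1) w)) by auto.
  rewrite (RS_ext_in _ (fun _ => 0)). rewrite RS_zero. ring.
  intros i _. rewrite (ind_F (CondI N n (i::w))). ring.
  intros [Hl [Hi HF]]. apply Hw. simpl in Hl. split; [lia|]. split; [|exact (Forall_inv_tail HF)].
  destruct (Nat.eq_dec (n-1) 0); [left; auto|right]. destruct Hi as [Hi|Hi]; [lia|].
  replace n with (S (n-1)) in Hi by lia. apply D4 in Hi; auto. lia.
Qed.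

Lemma sqN N : (1 <= N)%nat -> / sqrt (INR N) * / sqrt (INR N) = / INR N.
Proof. intro HN. assert (0 < INR N) by (apply lt_0_INR; lia).
  rewrite <- Rinv_mult, sqrt_sqrt; lra. Qed.

Lemma sc_box N i : (1 <= N)%nat -> (i <= N)%nat -> box01 (sc N i).
Proof. intros HN Hi. assert (HN' : 0 < INR N) by (apply lt_0_INR; lia). unfold box01, sc. split.
  apply Rmult_le_pos; [apply pos_INR| left; apply Rinv_0_lt_compat; auto].
  apply Rmult_le_reg_r with (INR N); auto. unfold Rdiv; rewrite Rmult_assoc, Rinv_l by lra.
  rewrite Rmult_1_r, Rmult_1_l; apply le_INR; lia. Qed.

Lemma sc0 N : sc N 0 = 0.
Proof. unfold sc; simpl; unfold Rdiv; ring. Qed.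
Lemma scN N : (1 <= N)%nat -> sc N N = 1.
Proof. intro HN. unfold sc. field. apply not_0_INR. lia. Qed.

Lemma good_n1 pi N p g : proj pi -> (1 <= N)%nat -> isD 1 p g ->
  Rabs (pi (DVsub (aStarN N (vN N 1 g)) (vN N (1 - 1) (astar 1 g)) [])) <= LipP (p 1%nat) / INR N.
Proof.
  intros P HN Hg. assert (HN' : 0 < INR N) by (apply lt_0_INR; lia).
  set (q := fun t => pi (peval (p 1%nat) [t])).
  assert (Hq : forall x, box01 x -> pi (g [x]) = q x).
  { intros x Hx. unfold q. destruct (Hg 1%nat [x]) as [H1 _].
    { split; [reflexivity|]. split; [lia|]. split; intros; simpl in *; lia. }
    rewrite H1; auto. constructor; auto. }
  unfold DVsub. rewrite (pd _ P), aStar_pi, vN_pi by auto.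
  rewrite (ind_T (CondI N (1-1) [])) by (split; [reflexivity| split; [left; reflexivity| constructor]]).
  simpl map. change (astar 1 g []) with (Cint (fun x => g [x]) 0 1). rewrite (pint _ P).
  rewrite (Rint_eq _ q 0 1).
  2: { intros x Hx. rewrite Rmin_left, Rmax_right in Hx by lra. apply Hq. unfold box01; lra. }
  2: { intros x. apply peval_cont; auto. }
  rewrite <- RS_scal.
  rewrite (RS_ext_in _ (fun i => q (sc N i) / INR N)).
  2: { intros i Hi. apply in_seq in Hi.
       rewrite (ind_T (inIw [i])). rewrite (ind_T (CondI N 1 [i])). simpl map. rewrite Hq.
       unfold Rdiv. rewrite <- (sqN N) by auto. simpl. ring.
       apply sc_box; lia.
       split; [reflexivity| split; [right|constructor; [lia|constructor]]].
       split; [constructor; [lia|constructor]|]. exists 1%nat. split; [reflexivity|]. split; [lia|]. split; intros; simpl in *; lia.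
       unfold inIw; simpl length. split; [constructor; [lia|constructor]|]. exists 1%nat. split; [reflexivity|]. split; [lia|]. split; intros; simpl in *; lia. }
  pose proof (core q (LipP (p 1%nat)) N 0 N HN ltac:(lia) (fun x => peval_cont pi (p 1%nat) [] x P)) as C1.
  rewrite sc0, Nat.add_0_l, scN in C1 by auto.
  assert (HL : forall x y, box01 x -> box01 y -> Rabs (q x - q y) <= LipP (p 1%nat) * Rabs (x - y)).
  { intros. apply peval_lip; auto. }
  specialize (C1 HL).
  simpl pow. replace (1 * ((INR N) ^ 0)) with 1 by (simpl; ring).
  replace (INR N * LipP (p 1%nat) / INR N ^ 2) with (LipP (p 1%nat) / INR N) in C1 by (field; lra).
  rewrite !Rmult_1_l. exact C1.
Qed.

Lemma sc_mono N a b : (1 <= N)%nat -> (a <= b)%nat -> sc N a <= sc N b.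
Proof. intros HN H. destruct (Nat.eq_dec a b). subst; lra. left; apply sc_lt; auto; lia. Qed.

Lemma T2 (h q : R -> R) L N j : (1 <= N)%nat -> (j <= N)%nat -> 0 <= L ->
  (forall x, continuous q x) ->
  (forall x y, box01 x -> box01 y -> Rabs (q x - q y) <= L * Rabs (x - y)) ->
  (forall x, sc N j < x <= 1 -> h x = q x) ->
  Rabs (RS (fun i => h (sc N i)) (seq (S j) (N - j)) / INR N - Rint h (sc N j) 1) <= L / INR N.
Proof.
  intros HN Hj HL0 Hc HL Hh. assert (HN' : 0 < INR N) by (apply lt_0_INR; lia).
  assert (Hj1 : sc N j <= 1) by (rewrite <- (scN N) by auto; apply sc_mono; auto).
  rewrite (Rint_eq h q) by (auto; intros x Hx; rewrite Rmin_left, Rmax_right in Hx by lra; apply Hh; lra).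
  unfold Rdiv at 1. rewrite Rmult_comm, <- RS_scal.
  rewrite (RS_ext_in _ (fun i => q (sc N i) / INR N)).
  2: { intros i Hi. apply in_seq in Hi. rewrite Hh. unfold Rdiv; ring.
       split. apply sc_lt; auto; lia. rewrite <- (scN N) by auto; apply sc_mono; auto; lia. }
  pose proof (core q L N j (N - j) HN ltac:(lia) Hc HL) as C1.
  replace (j + (N - j))%nat with N in C1 by lia. rewrite scN in C1 by auto.
  eapply Rle_trans; [exact C1|].
  apply Rle_trans with (INR N * L / INR N ^ 2); [|right; field; lra].
  unfold Rdiv. apply Rmult_le_compat_r. left; apply Rinv_0_lt_compat, pow_lt; auto.
  apply Rmult_le_compat_r; auto. apply le_INR; lia.
Qed.

Lemma T1 (h q : R -> R) L M N j : (1 <= N)%nat -> (1 <= j <= N)%nat -> 0 <= L ->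
  (forall x, continuous q x) ->
  (forall x y, box01 x -> box01 y -> Rabs (q x - q y) <= L * Rabs (x - y)) ->
  (forall x, 0 <= x < sc N j -> h x = q x) -> Rabs (q (sc N j)) <= M ->
  Rabs (RS (fun i => h (sc N i)) (seq 1 (j - 1)) / INR N - Rint h 0 (sc N j)) <= (L + M) / INR N.
Proof.
  intros HN Hj HL0 Hc HL Hh HM. assert (HN' : 0 < INR N) by (apply lt_0_INR; lia).
  assert (Hj0 : 0 < sc N j) by (rewrite <- (sc0 N); apply sc_lt; auto; lia).
  rewrite (Rint_eq h q) by (auto; intros x Hx; rewrite Rmin_left, Rmax_right in Hx by lra; apply Hh; lra).
  unfold Rdiv at 1. rewrite Rmult_comm, <- RS_scal.
  rewrite (RS_ext_in _ (fun i => q (sc N i) / INR N)).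
  2: { intros i Hi. apply in_seq in Hi. rewrite Hh. unfold Rdiv; ring.
       split. rewrite <- (sc0 N); apply sc_mono; auto; lia. apply sc_lt; auto; lia. }
  pose proof (core q L N 0 j HN ltac:(lia) Hc HL) as C1.
  rewrite Nat.add_0_l, sc0 in C1.
  replace j with (S (j - 1)) in C1 at 1 by lia. rewrite seq_S, RS_app in C1.
  replace (1 + (j - 1))%nat with j in C1 by lia.
  change (RS (fun i => q (sc N i) / INR N) [j]) with (q (sc N j) / INR N + 0) in C1.
  match goal with |- Rabs (?A - ?B) <= _ =>
    replace (A - B) with ((A + (q (sc N j) / INR N + 0) - B) - q (sc N j) / INR N) by ring end.
  eapply Rle_trans; [apply Rabs_triang|]. rewrite Rabs_Ropp.
  assert (E1 : INR j * L / INR N ^ 2 <= L / INR N).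
  { apply Rle_trans with (INR N * L / INR N ^ 2); [|right; field; lra].
    unfold Rdiv. apply Rmult_le_compat_r. left; apply Rinv_0_lt_compat, pow_lt; auto.
    apply Rmult_le_compat_r; auto. apply le_INR; lia. }
  assert (E2 : Rabs (q (sc N j) / INR N) <= M / INR N).
  { unfold Rdiv. rewrite Rabs_mult, (Rabs_pos_eq (/ INR N)) by (left; apply Rinv_0_lt_compat; auto).
    apply Rmult_le_compat_r; auto. left; apply Rinv_0_lt_compat; auto. }
  unfold Rdiv in *. lra.
Qed.

Lemma box_map N w : (1 <= N)%nat -> Forall (fun i => (i <= N)%nat) w -> Forall box01 (map (sc N) w).
Proof. intros HN H; induction H; simpl; constructor; auto. apply sc_box; auto. Qed.

Lemma astar_eq k (g : CVfun) x xs : (1 <= k)%nat -> astar (S k) g (x :: xs) =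
  Cadd (Cscale (ind (inX k 1 (x::xs))) (Cint (fun t => g (t :: x :: xs)) 0 x)) (Cint (fun t => g (t :: x :: xs)) x 1).
Proof. intros Hk. destruct k; [lia|]. reflexivity. Qed.

Lemma seq_split j N : (1 <= j <= N)%nat -> seq 1 N = seq 1 (j - 1) ++ j :: seq (S j) (N - j).
Proof. intros H. replace N with ((j - 1) + S (N - j))%nat at 1 by lia. rewrite seq_app.
  f_equal. simpl. replace (S (j - 1)) with j by lia. reflexivity. Qed.

Lemma inI_cons_char k i j w' : (1 <= k)%nat -> (1 <= i)%nat -> inI k (j::w') ->
  (inI (S k) (i::j::w') <-> (j < i)%nat \/ ((i < j)%nat /\ inXnat k 1 (j::w'))).
Proof. intros Hk Hi [Hp [m Hm]]. split.
  - intros [_ [m' Hm']]. destruct (D3 _ _ _ _ Hm' Hk) as [H|[H1 H2]]; simpl in *; [left; lia| right; auto].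
  - intros H. split. constructor; auto. destruct H as [H|[H1 H2]].
    + exists (S m). apply D1; auto.
    + exists 1%nat. apply D2; auto.
Qed.

Lemma inIw_len k i w : length w = k -> (inIw (i::w) <-> inI (S k) (i::w)).
Proof. intros H. unfold inIw. change (length (i::w)) with (S (length w)). rewrite H. tauto. Qed.

Lemma CondI_char N k i w : length w = k -> Forall (fun i => (i <= N)%nat) w -> (i <= N)%nat ->
  (CondI N (S k) (i::w) <-> inI (S k) (i::w)).
Proof. intros H1 H2 H3. unfold CondI. simpl. split. intros [_ [[H|H] _]]; auto; lia.
  intros H; split; [lia| split; [right; auto| constructor; auto]]. Qed.

Lemma ind_sq P : ind P * ind P = ind P.
Proof. destruct (ind_01 P) as [H|H]; rewrite H; ring. Qed.

Lemma zero_case a X b : a = 0 -> 0 <= b -> Rabs (a * X) <= b.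
Proof. intros -> Hb. rewrite Rmult_0_l, Rabs_R0. exact Hb. Qed.

Lemma good_ge2 pi N k p g w Lt : proj pi -> (1 <= N)%nat -> (1 <= k)%nat -> isD (S k) p g ->
  (forall m, (m <= S k)%nat -> LipP (p m) <= Lt) -> CondI N k w ->
  Rabs (pi (DVsub (aStarN N (vN N (S k) g)) (vN N (S k - 1) (astar (S k) g)) w))
    <= (/ sqrt (INR N)) ^ k * ((2 * Lt + MbP (p 1%nat)) / INR N).
Proof.
  intros P HN Hk Hg HLt HC. pose proof HC as [Hl [Hi HF]].
  assert (HN' : 0 < INR N) by (apply lt_0_INR; lia).
  destruct Hi as [Hk0|Hi]; [lia|].
  destruct w as [|j w']; [simpl in Hl; lia|].
  pose proof Hi as [Hpos [m Hm]].
  pose proof (Forall_inv HF) as HjN. pose proof (Forall_inv Hpos) as Hj1. simpl in HjN, Hj1.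
  pose proof (box_map N _ HN HF) as Hbox.
  pose proof Hm as HmR. apply (inX_sc N) in HmR; auto.
  assert (Hmk : (1 <= m <= k)%nat) by (destruct Hm as [_ [? _]]; lia).
  set (y := map (sc N) (j :: w')).
  set (h := fun x => pi (g (x :: y))).
  set (q1 := fun x => pi (peval (p 1%nat) (x :: y))).
  set (q2 := fun x => pi (peval (p (S m)) (x :: y))).
  set (incr := inXnat k 1 (j :: w')).
  assert (Hy0 : nth 0 y 0 = sc N j) by reflexivity.
  unfold DVsub. rewrite (pd _ P), aStar_pi, vN_pi by auto.
  rewrite (ind_T (CondI N (S k - 1) (j :: w'))) by (replace (S k - 1)%nat with k by lia; auto).
  replace (S k - 1)%nat with k by lia.
  change (map (sc N) (j :: w')) with y. unfold y at 1. simpl map. rewrite astar_eq by auto.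
  fold y.
  rewrite (pa _ P), (ps _ P), !(pint _ P).
  change (fun x => pi (g (x :: sc N j :: map (sc N) w'))) with h.
  rewrite (seq_split j N) by lia. rewrite RS_app.
  change (RS ?f (j :: ?l)) with (f j + RS f l).
  rewrite (RS_ext_in _ (fun i => (/ sqrt (INR N)) ^ S k * (ind incr * h (sc N i))) (seq 1 (j - 1))).
  2: { intros i Hi'. apply in_seq in Hi'.
       rewrite (ind_iff _ _ (inIw_len k i (j::w') Hl)).
       rewrite (ind_iff _ _ (CondI_char N k i (j::w') Hl HF ltac:(lia))).
       rewrite (ind_iff _ incr). 2: { rewrite inI_cons_char by (auto; lia). unfold incr. split; [intros [H|[_ H]]; [lia|auto]|intros H; right; split; [lia|auto]]. }
       transitivity ((/ sqrt (INR N)) ^ S k * (ind incr * ind incr * h (sc N i))); [unfold h, y; simpl; ring|].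
       rewrite ind_sq. reflexivity. }
  rewrite (RS_ext_in _ (fun i => (/ sqrt (INR N)) ^ S k * h (sc N i)) (seq (S j) (N - j))).
  2: { intros i Hi'. apply in_seq in Hi'.
       rewrite (ind_iff _ _ (inIw_len k i (j::w') Hl)).
       rewrite (ind_iff _ _ (CondI_char N k i (j::w') Hl HF ltac:(lia))).
       rewrite ind_T by (rewrite inI_cons_char by (auto; lia); left; lia).
       unfold h, y; simpl; ring. }
  rewrite (ind_F (inIw (j :: j :: w'))).
  2: { rewrite (inIw_len k j (j::w') Hl), inI_cons_char by (auto; lia). lia. }
  rewrite !RS_scal.
  rewrite (ind_iff (inX k 1 (sc N j :: map (sc N) w')) incr)
    by (unfold incr; change (sc N j :: map (sc N) w') with (map (sc N) (j::w')); symmetry; apply inX_sc; auto).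
  set (s := / sqrt (INR N)).
  set (R1 := RS (fun x : nat => h (sc N x)) (seq 1 (j - 1))).
  set (R2 := RS (fun x : nat => h (sc N x)) (seq (S j) (N - j))).
  set (I1 := Rint h 0 (sc N j)). set (I2 := Rint h (sc N j) 1).
  assert (Hss : s * s = / INR N) by (apply sqN; auto).
  match goal with |- Rabs ?E <= _ =>
    assert (Eq : E = s ^ k * (ind incr * (R1 / INR N - I1) + (R2 / INR N - I2)))
      by (unfold Rdiv; rewrite <- Hss; simpl; ring) end.
  rewrite Eq. clear Eq.
  assert (Hs0 : 0 <= s) by (left; apply Rinv_0_lt_compat, sqrt_lt_R0; auto).
  rewrite Rabs_mult, (Rabs_pos_eq (s ^ k)) by (apply pow_le; auto).
  apply Rmult_le_compat_l; [apply pow_le; auto|].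
  assert (Hc1 : forall x, continuous q1 x) by (intros; apply peval_cont; auto).
  assert (Hc2 : forall x, continuous q2 x) by (intros; apply peval_cont; auto).
  assert (HL1 : forall x x', box01 x -> box01 x' -> Rabs (q1 x - q1 x') <= LipP (p 1%nat) * Rabs (x - x'))
    by (intros; apply peval_lip; auto).
  assert (HL2 : forall x x', box01 x -> box01 x' -> Rabs (q2 x - q2 x') <= LipP (p (S m)) * Rabs (x - x'))
    by (intros; apply peval_lip; auto).
  assert (Hscj : box01 (sc N j)) by (apply sc_box; auto).
  assert (B2 : Rabs (R2 / INR N - I2) <= LipP (p (S m)) / INR N).
  { apply (T2 h q2); auto. apply LipP_nonneg.
    intros x Hx. unfold h, q2. destruct (Hg (S m) (x :: y)) as [H1 _].
    apply inX_cons_gt; auto. rewrite Hy0; lra.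
    rewrite H1; [reflexivity|]. constructor; auto. unfold box01 in *; lra. }
  assert (B1 : Rabs (ind incr * (R1 / INR N - I1)) <= (LipP (p 1%nat) + MbP (p 1%nat)) / INR N).
  { pose proof (classic incr) as Hor. destruct Hor as [Hin|Hin]. 2: { apply zero_case. apply ind_F; auto.
      pose proof (LipP_nonneg (p 1%nat)); pose proof (MbP_nonneg (p 1%nat)).
      assert (0 < / INR N) by (apply Rinv_0_lt_compat; auto). unfold Rdiv; nra. }
    rewrite ind_T, Rmult_1_l by auto. apply (T1 h q1); [auto|lia|apply LipP_nonneg|auto|auto| |].
      + intros x Hx. unfold h, q1. destruct (Hg 1%nat (x :: y)) as [H1 _].
        apply inX_cons_lt; auto. apply (inX_sc N) in Hin; auto. rewrite Hy0; lra.
        rewrite H1; [reflexivity|]. constructor; auto. unfold box01 in *; lra.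
      + apply peval_bound; auto.
  }
  eapply Rle_trans; [apply Rabs_triang|].
  assert (LipP (p 1%nat) <= Lt) by (apply HLt; lia).
  assert (LipP (p (S m)) <= Lt) by (apply HLt; lia).
  assert (0 < / INR N) by (apply Rinv_0_lt_compat; auto).
  unfold Rdiv in *. nra.
Qed.

Lemma RS_delta j (P : Prop) X a len : RS (fun i => ind (j = i /\ P) * X) (seq a len) = ind ((a <= j < a+len)%nat /\ P) * X.
Proof.
  revert a; induction len; intros a; simpl.
  - rewrite ind_F by lia. unfold RS; simpl; ring.
  - unfold RS in *; simpl. rewrite IHlen.
    destruct (Nat.eq_dec j a).
    + subst. rewrite (ind_F ((S a <= a < _)%nat /\ P)) by lia.
      rewrite (ind_iff (a = a /\ P) ((a <= a < a + S len)%nat /\ P)) by (split; intros [? ?]; split; auto; lia). ring.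
    + rewrite (ind_F (j = a /\ P)) by tauto.
      rewrite (ind_iff ((S a <= j < S a + len)%nat /\ P) ((a <= j < a + S len)%nat /\ P)) by (split; intros [? ?]; split; auto; lia). ring.
Qed.

Lemma part1 n (g : CVfun) : (1 <= n)%nat -> forall N, (1 <= N)%nat ->
  forall w, aN N (vN N n g) w = vN N (S n) (acont n g) w.
Proof.
  intros Hn N HN w. apply Ceq_proj; intros pi P.
  destruct w as [|j w'].
  - unfold aN, vN, acont, adisc. rewrite !(ps _ P), (proj_Csum _ _ _ P), (p0 _ P).
    rewrite RS_zero. simpl map. cbv iota. rewrite (p0 _ P). ring.
  - unfold aN. rewrite (ps _ P), (proj_Csum _ _ _ P). unfold adisc.
    rewrite (RS_ext_in _ (fun i => ind (j = i /\ inIw (j :: w')) * pi (vN N n g w'))) by (intros; apply (ps _ P)).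
    rewrite RS_delta. unfold vN, acont. change (fun i => INR i / INR N) with (sc N). simpl map.
    rewrite !(ps _ P).
    match goal with |- ?s * (ind ?A1 * (ind ?C1 * ?sn * ?G)) = ind ?C2 * ?sn1 * (ind ?B1 * ind ?B2 * ?G) =>
      assert (E : ind A1 * ind C1 = ind C2 * (ind B1 * ind B2));
      [| transitivity (s * sn * G * (ind A1 * ind C1)); [ring| rewrite E; simpl; ring]] end.
    rewrite <- !ind_and. apply ind_iff.
    assert (HN' : 0 < INR N) by (apply lt_0_INR; lia).
    unfold inIw. simpl length. split.
    + intros [[Hj Hw] [Hl [_ HF]]]. subst n. split; [split; [reflexivity| split; [right; exact Hw| constructor; [lia|exact HF]]]|].
      split. unfold sc. split. apply Rmult_le_pos; [apply pos_INR| left; apply Rinv_0_lt_compat; auto].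
      apply Rmult_le_reg_r with (INR N); auto. unfold Rdiv; rewrite Rmult_assoc, Rinv_l by lra.
      rewrite Rmult_1_r, Rmult_1_l; apply le_INR; lia.
      destruct Hw as [_ [m Hm]]. exists m. change (sc N j :: map (sc N) w') with (map (sc N) (j::w')).
      apply inX_sc; auto.
    + intros [[Hl [[H0|Hw] HF]] [_ [m Hm]]]; [lia|]. injection Hl as Hl.
      pose proof (Forall_inv HF) as HjN. pose proof (Forall_inv_tail HF) as HF'.
      pose proof Hw as Hw0. destruct Hw as [Hpos [m' Hm']].
      pose proof (Forall_inv Hpos) as Hj1. pose proof (Forall_inv_tail Hpos) as Hpos'.
      simpl in HjN, Hj1.
      rewrite Hl. split; [split; [lia| exact Hw0]|].
      split; [reflexivity|]. split; [|exact HF'].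
      right.
      split. exact Hpos'. exists (Nat.max 1 (m' - 1)). apply (inX_sc N); auto.
      apply (inX_sc N) in Hm'; auto. simpl in Hm'. apply inX_tail in Hm'; [|lia]. exact Hm'.
Qed.

Lemma RS_ge_in {A} (f : A -> R) l a : (forall x, 0 <= f x) -> In a l -> f a <= RS f l.
Proof. intros H Ha. unfold RS. induction l; simpl in *; [contradiction|].
  destruct Ha as [->|Ha]. pose proof (RS_nonneg f l H). unfold RS in H0. lra.
  specialize (IHl Ha). specialize (H a0). lra. Qed.

Lemma CondI_words N k w : CondI N k w -> In w (words N k).
Proof. intros [Hl [Hi HF]]. rewrite <- Hl. apply words_in.
  destruct Hi as [H0|[Hp _]].
  - subst. destruct w; [apply Forall_nil| simpl in *; lia].
  - clear Hl. induction w; constructor; inversion Hp; inversion HF; subst; auto. Qed.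

Lemma pow_inv_cancel x k : x <> 0 -> (/ x) ^ k * x ^ k = 1.
Proof. intro H. rewrite <- Rpow_mult_distr, Rinv_l, pow1; auto. Qed.

Theorem mainTheorem16 :
  forall (n : nat) (p : nat -> mpoly) (g : CVfun),
    (1 <= n)%nat -> isD n p g ->
    (forall (N : nat), (1 <= N)%nat ->
       forall w, aN N (vN N n g) w = vN N (S n) (acont n g) w)
    /\
    (exists Cst : R, Cst > 0 /\
       forall (N : nat), (1 <= N)%nat ->
         DVnorm_le (DVsub (aStarN N (vN N n g)) (vN N (n - 1) (astar n g)))
                   (Cst / INR N)).
Proof.
  intros n p g Hn Hg. split.
  { intros N HN w. apply part1; auto. }
  set (Lt := RS (fun m => LipP (p m)) (seq 0 (S n))).
  assert (HLt : forall m, (m <= n)%nat -> LipP (p m) <= Lt).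
  { intros m Hm. apply (RS_ge_in (fun m => LipP (p m))). intros; apply LipP_nonneg. apply in_seq; lia. }
  assert (HL0 : 0 <= Lt) by (apply RS_nonneg; intros; apply LipP_nonneg).
  set (B := 2 * Lt + MbP (p 1%nat)).
  assert (HB : 0 <= B) by (pose proof (MbP_nonneg (p 1%nat)); unfold B; lra).
  exists (2 * B + 1). split; [lra|].
  intros N HN. assert (HN' : 0 < INR N) by (apply lt_0_INR; lia).
  set (s := / sqrt (INR N)).
  assert (Hs0 : 0 <= s) by (left; apply Rinv_0_lt_compat, sqrt_lt_R0; auto).
  set (Dv := DVsub (aStarN N (vN N n g)) (vN N (n - 1) (astar n g))).
  assert (Hgood : forall pi w, proj pi -> CondI N (n - 1) w -> Rabs (pi (Dv w)) <= s ^ (n - 1) * (B / INR N)).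
  { intros pi w P HC. unfold Dv.
    destruct n as [|k]; [lia|]. destruct (Nat.eq_dec k 0) as [->|Hk].
    - destruct HC as [Hl _]. destruct w; [|simpl in Hl; lia].
      eapply Rle_trans. apply (good_n1 pi N p g); auto. replace (s ^ (S 0 - 1)) with 1 by (simpl; ring). rewrite Rmult_1_l.
      unfold Rdiv. apply Rmult_le_compat_r. left; apply Rinv_0_lt_compat; auto.
      specialize (HLt 1%nat (le_n 1)). pose proof (MbP_nonneg (p 1%nat)). unfold B. lra.
    - replace (S k - 1)%nat with k by lia.
      pose proof (good_ge2 pi N k p g w Lt P HN ltac:(lia) Hg HLt) as G1.
      replace (S k - 1)%nat with k in HC by lia. specialize (G1 HC).
      replace (S k - 1)%nat with k in G1 by lia. exact G1. }
  assert (Hbad : forall pi w, proj pi -> ~ CondI N (n - 1) w -> pi (Dv w) = 0).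
  { intros pi w P HC. apply notgood_zero; auto. }
  intros ws Hnd.
  eapply Rle_trans.
  apply (sum_bound (fun w => Cnorm2 (Dv w)) (words N (n - 1)) (2 * (s ^ (n - 1) * (B / INR N)) ^ 2) ws Hnd).
  - apply Rmult_le_pos; [lra| apply pow2_ge_0].
  - intros w Hw. assert (HC : ~ CondI N (n - 1) w) by (intro HC; apply Hw; apply CondI_words; auto).
    unfold Cnorm2. rewrite (Hbad fst w proj_fst HC), (Hbad snd w proj_snd HC). ring.
  - intros w Hw. destruct (classic (CondI N (n - 1) w)) as [HC|HC].
    + apply Cnorm2_bound; [apply (Hgood fst)|apply (Hgood snd)]; auto using proj_fst, proj_snd.
    + unfold Cnorm2. rewrite (Hbad fst w proj_fst HC), (Hbad snd w proj_snd HC).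
      replace (0 * 0 + 0 * 0) with 0 by ring. apply Rmult_le_pos; [lra| apply pow2_ge_0].
  - rewrite words_len, pow_INR.
    replace (2 * (s ^ (n - 1) * (B / INR N)) ^ 2 * INR N ^ (n - 1)) with
      (2 * (B / INR N) ^ 2 * (((s * s) ^ (n - 1)) * INR N ^ (n - 1))).
    2: { rewrite Rpow_mult_distr. ring. }
    unfold s. rewrite sqN, pow_inv_cancel by (auto; lra).
    replace ((2 * B + 1) / INR N) with ((2 * B + 1) * / INR N) by reflexivity.
    unfold Rdiv. rewrite !Rpow_mult_distr.
    assert (0 < (/ INR N) ^ 2) by (apply pow_lt, Rinv_0_lt_compat; auto).
    simpl pow in *. nra.
Qed.
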